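(* Let $K>0$ and let $\eta:[0,K]\to[0,\infty)$ be twice differentiable (one-sided at the endpoints) with $\eta(K)=0$, and set $\phi(k)=k\eta(k)$. Suppose (i) $\eta'(k)\le 0$ for all $k\in[0,K]$, and (ii) $k\eta''(k)+2\eta'(k)\le 0$ for all $k\in[0,K)$ (equivalently $\phi''(k)\le0$ for $k\in[0,K)$). Then for all $\Delta t,\Delta N>0$, the collision-free condition $$\frac{\Delta N}{\Delta t}\ge \sup_{k\in[0,K)}\frac{\phi(k)}{1-k/K}$$ holds if and only if the CFL condition $$\frac{\Delta N}{\Delta t}\ge \max_{k\in[0,K]}\left|-\eta'(k)k^2\right|$$ holds. In particular: for the Greenshields relation $\eta(k)=V(1-k/K)$ ($V>0$), both conditions are equivalent to $\Delta N/\Delta t\ge VK$; and for the triangular relation $\eta(k)=\min\{V,W(K/k-1)\}$ ($V,W>0$, with $\eta'$ taken wherever it exists), both conditions are equivalent to $\Delta N/\Delta t\ge WK$.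
   Context: $\eta$ is a speed-density relation, $\phi$ the corresponding flow-density relation (fundamental diagram), $K$ the jam density, $\Delta t$ a time step and $\Delta N$ a vehicle step. *)

(* Defs.v *)
From Stdlib Require Import Reals.
From Coquelicot Require Import Coquelicot.
Open Scope R_scope.

Definition Icc0 (K : R) : R -> Prop := fun k => 0 <= k <= K.

(* Derivative of f at x relative to the set D (one-sided at endpoints of an
   interval): the difference quotient tends to l as y -> x, y in D, y <> x. *)
Definition deriv_within (D : R -> Prop) (f : R -> R) (x l : R) : Prop :=
  limit1_in (fun y => (f y - f x) / (y - x)) (fun y => D y /\ y <> x) l x.

Definition flow (eta : R -> R) (k : R) : R := k * eta k.

Definition cf_bound (eta : R -> R) (K : R) : Rbar :=
  Lub_Rbar (fun y => exists k, 0 <= k < K /\ y = flow eta k / (1 - k / K)).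

Definition cfl_bound (eta' : R -> R) (K : R) : Rbar :=
  Lub_Rbar (fun y => exists k, 0 <= k <= K /\ y = Rabs (- eta' k * k ^ 2)).

(* Same, with eta' taken wherever it exists (derivative relative to [0,K]). *)
Definition cfl_bound_ae (eta : R -> R) (K : R) : Rbar :=
  Lub_Rbar (fun y => exists k d, 0 <= k <= K /\ deriv_within (Icc0 K) eta k d
                                 /\ y = Rabs (- d * k ^ 2)).

Definition greenshields (V K : R) (k : R) : R := V * (1 - k / K).

(* Triangular: eta(k) = min{V, W (K/k - 1)}, with the value V at k = 0
   (the limit as k -> 0+, K/k undefined there). *)
Definition triangular (V W K : R) (k : R) : R :=
  if Rle_dec k 0 then V else Rmin V (W * (K / k - 1)).

(* Main.v *)
Require Import Defs.
From Stdlib Require Import Reals Lra.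
From Coquelicot Require Import Coquelicot.
Open Scope R_scope.

Lemma lim_def f D l x : limit1_in f D l x <->
  forall eps, eps > 0 -> exists alp, alp > 0 /\
   forall y, D y /\ Rabs (y - x) < alp -> Rabs (f y - l) < eps.
Proof. unfold limit1_in, limit_in; simpl; unfold R_dist; tauto. Qed.

Lemma lim_sub f (D D' : R -> Prop) l x : (forall y, D' y -> D y) ->
  limit1_in f D l x -> limit1_in f D' l x.
Proof.
  intros HD H. rewrite lim_def in *. intros e He. destruct (H e He) as [a [Ha Hy]].
  exists a; split; auto. intros y [Dy Hy']. apply Hy; auto.
Qed.

Lemma lim_ext f g D l x : (forall y, D y -> f y = g y) ->
  limit1_in f D l x -> limit1_in g D l x.
Proof.
  intros E H. rewrite lim_def in *. intros e He. destruct (H e He) as [a [Ha Hy]].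
  exists a; split; auto. intros y [Dy Hy']. rewrite <- E by auto. apply Hy; auto.
Qed.

Lemma lim_eq f D l l' x : l = l' -> limit1_in f D l x -> limit1_in f D l' x.
Proof. intros ->; auto. Qed.

Lemma dw_cont D f x l : deriv_within D f x l ->
  limit1_in f (fun y => D y /\ y <> x) (f x) x.
Proof.
  unfold deriv_within. intro H.
  assert (H2 : limit1_in (fun y => f x + (f y - f x) / (y - x) * (y - x))
     (fun y => D y /\ y <> x) (f x + l * (x - x)) x).
  { apply limit_plus. apply (limit_free (fun _ => f x) _ x x).
    apply limit_mul; auto. apply limit_minus. apply lim_x. apply (limit_free (fun _ => x) _ x x). }
  replace (f x + l * (x - x)) with (f x) in H2 by ring.
  eapply lim_ext; [|exact H2]. intros y [_ Hy]. simpl. field. lra.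
Qed.

Lemma dw_interior K f x l : 0 < x < K -> deriv_within (Icc0 K) f x l ->
  derivable_pt_lim f x l.
Proof.
  intros Hx H. unfold deriv_within in H. rewrite lim_def in H.
  intros e He. destruct (H e He) as [a [Ha Hy]].
  assert (Hm : 0 < Rmin a (Rmin x (K - x))).
  { apply Rmin_glb_lt; [lra| apply Rmin_glb_lt; lra]. }
  exists (mkposreal _ Hm). intros h Hh Hha. simpl in Hha.
  assert (h1 := Rmin_l a (Rmin x (K - x))).
  assert (h2 := Rmin_r a (Rmin x (K - x))).
  assert (h3 := Rmin_l x (K - x)). assert (h4 := Rmin_r x (K - x)).
  replace ((f (x + h) - f x) / h) with ((f (x+h) - f x) / (x + h - x)) by (f_equal; ring).
  apply Hy. split.
  - unfold Icc0. split; [|lra]. apply Rabs_def2 in Hha. lra.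
  - replace (x + h - x) with h by ring. lra.
Qed.

Lemma mono f df a b : a < b ->
  (forall x, a < x < b -> derivable_pt_lim f x (df x)) ->
  (forall x, a < x < b -> 0 <= df x) ->
  limit1_in f (fun y => a < y < b) (f a) a ->
  limit1_in f (fun y => a < y < b) (f b) b ->
  f a <= f b.
Proof.
  intros Hab Hd Hpos Ca Cb.
  destruct (Rle_or_lt (f a) (f b)) as [|Hlt]; auto. exfalso.
  set (e := (f a - f b) / 3).
  rewrite lim_def in Ca, Cb.
  destruct (Ca e ltac:(unfold e; lra)) as [d1 [Hd1 C1]].
  destruct (Cb e ltac:(unfold e; lra)) as [d2 [Hd2 C2]].
  set (s := Rmin d1 (Rmin d2 ((b - a) / 3)) / 2).
  assert (h1 := Rmin_l d1 (Rmin d2 ((b - a) / 3))).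
  assert (h2 := Rmin_r d1 (Rmin d2 ((b - a) / 3))).
  assert (h3 := Rmin_l d2 ((b - a) / 3)). assert (h4 := Rmin_r d2 ((b - a) / 3)).
  assert (Hs : 0 < s).
  { unfold s. assert (0 < Rmin d1 (Rmin d2 ((b - a) / 3))); [|lra].
    apply Rmin_glb_lt; [lra| apply Rmin_glb_lt; lra]. }
  assert (s <= (b - a) / 6) by (unfold s; lra).
  assert (A1 : Rabs (f (a + s) - f a) < e).
  { apply C1. split; [split; lra|]. replace (a + s - a) with s by ring. rewrite Rabs_right; unfold s in *; lra. }
  assert (A2 : Rabs (f (b - s) - f b) < e).
  { apply C2. split; [split; lra|]. replace (b - s - b) with (- s) by ring. rewrite Rabs_Ropp, Rabs_right; unfold s in *; lra. }
  destruct (MVT_gen f (a + s) (b - s) df) as [c [Hc Hmvt]].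
  - intros x Hx. rewrite Rmin_left in Hx by lra. rewrite Rmax_right in Hx by lra.
    apply is_derive_Reals. apply Hd. lra.
  - intros x Hx. rewrite Rmin_left in Hx by lra. rewrite Rmax_right in Hx by lra.
    apply derivable_continuous_pt. exists (df x). apply Hd. lra.
  - rewrite Rmin_left in Hc by lra. rewrite Rmax_right in Hc by lra.
    assert (0 <= df c) by (apply Hpos; lra).
    assert (0 <= df c * (b - s - (a + s))) by (apply Rmult_le_pos; lra).
    apply Rabs_def2 in A1. apply Rabs_def2 in A2. unfold e in *. lra.
Qed.

Lemma lub_eq (E : R -> Prop) C : (forall x, E x -> x <= C) ->
  (forall b, b < C -> exists x, E x /\ b < x) -> Lub_Rbar E = Finite C.
Proof.
  intros Hub Happ. apply is_lub_Rbar_unique. split.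
  - intros x Ex. simpl. auto.
  - intros [r| |] Hb; simpl; auto.
    + destruct (Rle_or_lt C r) as [|Hr]; auto. destruct (Happ r Hr) as [x [Ex Hx]].
      specialize (Hb x Ex). simpl in Hb. lra.
    + destruct (Happ (C - 1) ltac:(lra)) as [x [Ex _]]. specialize (Hb x Ex). simpl in Hb. auto.
Qed.

Lemma deriv_bound (D : R -> Prop) f x d B : deriv_within D f x d ->
  (forall e del, 0 < e -> 0 < del -> exists y, D y /\ y <> x /\ Rabs (y - x) < del /\
      Rabs ((f y - f x) / (y - x)) <= B + e) -> Rabs d <= B.
Proof.
  intros H Hp. destruct (Rle_or_lt (Rabs d) B) as [|Hlt]; auto. exfalso.
  unfold deriv_within in H. rewrite lim_def in H.
  destruct (H ((Rabs d - B)/2) ltac:(lra)) as [a [Ha Hy]].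
  destruct (Hp ((Rabs d - B)/2) a ltac:(lra) Ha) as [y [Dy [Hyx [Hya Hq]]]].
  specialize (Hy y (conj (conj Dy Hyx) Hya)).
  assert (T := Rabs_triang_inv d ((f y - f x) / (y - x))).
  rewrite <- Rabs_Ropp in Hy. replace (- ((f y - f x) / (y - x) - d)) with (d - (f y - f x) / (y - x)) in Hy by ring.
  lra.
Qed.

Ltac dsolve H := repeat split;
  try (eexists; exact H);
  try (match type of H with is_derive ?f ?x ?l =>
         match goal with |- context [Derive ?g x] =>
           replace (Derive g x) with l by (symmetry; apply is_derive_unique; exact H) end end).

Lemma lim_const c D x : limit1_in (fun _ => c) D c x.
Proof. rewrite lim_def. intros e He. exists 1. split; [lra|]. intros. rewrite Rminus_diag, Rabs_R0. lra. Qed.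

Lemma lim_sq D x : limit1_in (fun y => y^2) D (x^2) x.
Proof.
  assert (H := limit_mul _ _ D x x x (lim_x D x) (lim_x D x)).
  eapply lim_ext; [|eapply lim_eq; [|exact H]]; simpl; intros; ring.
Qed.

Lemma part1 : forall (K : R) (eta eta1 eta2 : R -> R),
     0 < K ->
     (forall k, 0 <= k <= K -> 0 <= eta k) ->
     (forall k, 0 <= k <= K -> deriv_within (Icc0 K) eta k (eta1 k)) ->
     (forall k, 0 <= k <= K -> deriv_within (Icc0 K) eta1 k (eta2 k)) ->
     eta K = 0 ->
     (forall k, 0 <= k <= K -> eta1 k <= 0) ->
     (forall k, 0 <= k < K -> k * eta2 k + 2 * eta1 k <= 0) ->
     cf_bound eta K = Finite (- eta1 K * K^2) /\ cfl_bound eta1 K = Finite (- eta1 K * K^2).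
Proof.
  intros K eta eta1 eta2 HK Hpos Hd1 Hd2 HK0 Hneg Hconc.
  assert (Ce : forall x, 0 <= x <= K -> limit1_in eta (fun y => Icc0 K y /\ y <> x) (eta x) x).
  { intros x Hx. apply dw_cont with (eta1 x). auto. }
  assert (Ce1 : forall x, 0 <= x <= K -> limit1_in eta1 (fun y => Icc0 K y /\ y <> x) (eta1 x) x).
  { intros x Hx. apply dw_cont with (eta2 x). auto. }
  assert (De : forall x, 0 < x < K -> is_derive eta x (eta1 x)).
  { intros x Hx. apply is_derive_Reals. apply dw_interior with K; auto. apply Hd1. lra. }
  assert (De1 : forall x, 0 < x < K -> is_derive eta1 x (eta2 x)).
  { intros x Hx. apply is_derive_Reals. apply dw_interior with K; auto. apply Hd2. lra. }
  assert (Sub : forall a x, 0 <= a -> (x = a \/ x = K) -> forall y, a < y < K -> Icc0 K y /\ y <> x).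
  { intros a x Ha Hx y Hy. unfold Icc0. split; [lra|]. destruct Hx; subst; lra. }
  assert (S1 : forall k, 0 <= k <= K -> - eta1 k * k^2 <= - eta1 K * K^2).
  { intros k Hk. destruct (Req_dec k K) as [->|Hne]; [lra|].
    apply (mono (fun x => - eta1 x * x^2) (fun x => - (eta2 x * x^2 + eta1 x * (2*x)))).
    - lra.
    - intros x Hx. apply is_derive_Reals. assert (H := De1 x ltac:(lra)).
      auto_derive; dsolve H. ring.
    - intros x Hx. assert (H := Hconc x ltac:(lra)). nra.
    - apply limit_mul. apply limit_Ropp. eapply lim_sub; [|apply Ce1; lra]. apply Sub; lra.
      apply lim_sq.
    - apply limit_mul. apply limit_Ropp. eapply lim_sub; [|apply Ce1; lra]. apply Sub; lra.
      apply lim_sq. }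
  assert (S2 : forall k, 0 <= k <= K -> eta K + K * eta1 K <= eta k + k * eta1 k).
  { intros k Hk. destruct (Req_dec k K) as [->|Hne]; [lra|].
    cut (- (eta k + k * eta1 k) <= - (eta K + K * eta1 K)); [lra|].
    apply (mono (fun x => - (eta x + x * eta1 x)) (fun x => - (eta1 x + (eta1 x + x * eta2 x)))).
    - lra.
    - intros x Hx. apply is_derive_Reals. assert (H := De1 x ltac:(lra)). assert (H' := De x ltac:(lra)).
      auto_derive; dsolve H; dsolve H'. ring.
    - intros x Hx. assert (H := Hconc x ltac:(lra)). nra.
    - apply limit_Ropp. apply limit_plus. eapply lim_sub; [|apply Ce; lra]. apply Sub; lra.
      apply limit_mul. apply lim_x. eapply lim_sub; [|apply Ce1; lra]. apply Sub; lra.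
    - apply limit_Ropp. apply limit_plus. eapply lim_sub; [|apply Ce; lra]. apply Sub; lra.
      apply limit_mul. apply lim_x. eapply lim_sub; [|apply Ce1; lra]. apply Sub; lra. }
  assert (S3 : forall k, 0 <= k < K -> k * eta k <= K * eta1 K * (k - K)).
  { intros k Hk.
    cut (k * eta k - K * eta1 K * (k - K) <= K * eta K - K * eta1 K * (K - K)).
    { rewrite HK0. lra. }
    apply (mono (fun x => x * eta x - K * eta1 K * (x - K)) (fun x => eta x + x * eta1 x - K * eta1 K)).
    - lra.
    - intros x Hx. apply is_derive_Reals. assert (H' := De x ltac:(lra)).
      auto_derive; dsolve H'. ring.
    - intros x Hx. assert (H := S2 x ltac:(lra)). rewrite HK0 in H. lra.
    - apply limit_minus. apply limit_mul. apply lim_x. eapply lim_sub; [|apply Ce; lra]. apply Sub; lra.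
      apply limit_mul. apply lim_const.
      apply limit_minus. apply lim_x. apply lim_const.
    - apply limit_minus. apply limit_mul. apply lim_x. eapply lim_sub; [|apply Ce; lra]. apply Sub; lra.
      apply limit_mul. apply lim_const.
      apply limit_minus. apply lim_x. apply lim_const. }
  assert (HC : 0 <= - eta1 K * K^2) by (assert (H := Hneg K ltac:(lra)); nra).
  split.
  - unfold cf_bound. apply lub_eq.
    + intros x [k [Hk ->]]. unfold flow. assert (H := S3 k Hk).
      replace (k * eta k / (1 - k / K)) with (K * (k * eta k) / (K - k)) by (field; lra).
      apply Rle_div_l; [lra|]. nra.
    + intros b Hb. destruct (Rlt_or_le b 0) as [Hb0|Hb0].
      { exists 0. split; [exists 0; split; [lra|]|]. unfold flow. field. lra. lra. }
      set (c := - eta1 K). set (C := - eta1 K * K^2) in *.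
      assert (HCc : C = c * K^2) by (unfold C, c; ring).
      assert (Hc : 0 < c).
      { destruct (Rle_or_lt c 0) as [Hc|Hc]; auto. assert (c * K^2 <= 0); [|lra].
        assert (0 < K^2) by (apply pow_lt; lra). nra. }
      assert (HKc : 0 < 2 * K * (K + c)) by nra.
      set (d0 := Rmin (c/2) ((C - b) / (2 * K * (K + c)))).
      assert (Hd0a := Rmin_l (c/2) ((C - b) / (2 * K * (K + c)))).
      assert (Hd0b := Rmin_r (c/2) ((C - b) / (2 * K * (K + c)))).
      fold d0 in Hd0a, Hd0b.
      assert (Hd0 : 0 < d0).
      { unfold d0. apply Rmin_glb_lt; [lra|]. apply Rdiv_lt_0_compat; lra. }
      assert (HdK : K * d0 * (K + c) <= (C - b) / 2).
      { apply Rmult_le_compat_l with (r := 2 * K * (K + c)) in Hd0b; [|lra].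
        replace (2 * K * (K + c) * ((C - b) / (2 * K * (K + c)))) with (C - b) in Hd0b by (field; lra).
        lra. }
      assert (H := Hd1 K ltac:(lra)). unfold deriv_within in H. rewrite lim_def in H.
      destruct (H d0 Hd0) as [alp [Halp Hy]].
      set (t := Rmin alp (Rmin K d0) / 2).
      assert (T1 := Rmin_l alp (Rmin K d0)). assert (T2 := Rmin_r alp (Rmin K d0)).
      assert (T3 := Rmin_l K d0). assert (T4 := Rmin_r K d0).
      assert (Ht : 0 < t).
      { unfold t. assert (0 < Rmin alp (Rmin K d0)); [|lra].
        apply Rmin_glb_lt; [lra|apply Rmin_glb_lt; lra]. }
      assert (Ht1 : t < alp) by (unfold t; lra).
      assert (Ht2 : t < K) by (unfold t; lra).
      assert (Ht3 : t < d0) by (unfold t; lra).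
      set (y := K - t).
      specialize (Hy y). 
      assert (Hq : Rabs ((eta y - eta K) / (y - K) - eta1 K) < d0).
      { apply Hy. unfold y, Icc0. split; [split; [lra|lra]|].
        replace (K - t - K) with (- t) by ring. rewrite Rabs_Ropp, Rabs_right; lra. }
      rewrite HK0 in Hq. apply Rabs_def2 in Hq.
      set (q := (eta y - 0) / (y - K)) in Hq.
      assert (Heq : eta y = - q * t) by (unfold q, y; field; lra).
      exists (flow eta y / (1 - y / K)). split.
      * exists y. split; [unfold y; lra| auto].
      * replace (flow eta y / (1 - y / K)) with (K * y * (- q)) by (unfold flow; rewrite Heq; unfold y; field; lra).
        assert (Hmq : - q > c - d0) by (unfold c in *; lra).
        assert (Hy0 : 0 < y) by (unfold y; lra).
        assert (K * y * (- q) >= K * y * (c - d0)) by (apply Rle_ge, Rmult_le_compat_l; nra).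
        assert (K * y * (c - d0) >= K * (K - d0) * (c - d0)).
        { apply Rle_ge. apply Rmult_le_compat_r; [lra|]. apply Rmult_le_compat_l; unfold y; lra. }
        assert (K * (K - d0) * (c - d0) >= C - K * d0 * (K + c)) by (rewrite HCc; nra).
        lra.
  - unfold cfl_bound. apply lub_eq.
    + intros x [k [Hk ->]]. assert (H := S1 k Hk). assert (H' := Hneg k Hk).
      rewrite Rabs_right; [lra|]. nra.
    + intros b Hb. exists (Rabs (- eta1 K * K^2)). split.
      * exists K. split; [lra|auto].
      * rewrite Rabs_right; lra.
Qed.

Lemma near_pt K k del : 0 < K -> 0 <= k <= K -> 0 < del ->
  exists y, Icc0 K y /\ y <> k /\ Rabs (y - k) < del.
Proof.
  intros HK Hk Hd. unfold Icc0.
  destruct (Req_dec k K) as [->|Hne].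
  - exists (K - Rmin (del/2) K). assert (H1 := Rmin_l (del/2) K). assert (H2 := Rmin_r (del/2) K).
    assert (0 < Rmin (del/2) K) by (apply Rmin_glb_lt; lra).
    split; [lra|]. split; [lra|]. replace (K - Rmin (del / 2) K - K) with (- Rmin (del/2) K) by ring.
    rewrite Rabs_Ropp, Rabs_right; lra.
  - exists (k + Rmin (del/2) (K - k)). assert (H1 := Rmin_l (del/2) (K - k)). assert (H2 := Rmin_r (del/2) (K-k)).
    assert (0 < Rmin (del/2) (K - k)) by (apply Rmin_glb_lt; lra).
    split; [lra|]. split; [lra|]. replace (k + Rmin (del / 2) (K - k) - k) with (Rmin (del/2) (K-k)) by ring.
    rewrite Rabs_right; lra.
Qed.

Lemma lt1 k K : 0 < K -> k < K -> 1 - k / K <> 0.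
Proof. intros HK Hk. assert (k / K < 1) by (apply Rlt_div_l; lra). lra. Qed.

Lemma abs_dk2 d k : Rabs (- d * k ^ 2) = Rabs d * k ^ 2.
Proof. rewrite Rabs_mult, Rabs_Ropp. f_equal. apply Rabs_right. apply Rle_ge. apply pow2_ge_0. Qed.

Lemma part2 : forall K V : R, 0 < K -> 0 < V ->
     forall dt dN : R, 0 < dt -> 0 < dN ->
       (Rbar_le (cf_bound (greenshields V K) K) (Finite (dN / dt)) <-> dN / dt >= V * K) /\
       (Rbar_le (cfl_bound_ae (greenshields V K) K) (Finite (dN / dt)) <-> dN / dt >= V * K).
Proof.
  intros K V HK HV dt dN Hdt HdN.
  assert (E1 : cf_bound (greenshields V K) K = Finite (V * K)).
  { unfold cf_bound. apply lub_eq.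
    - intros x [k [Hk ->]]. unfold flow, greenshields.
      replace (k * (V * (1 - k / K)) / (1 - k / K)) with (k * V) by (field; repeat split; lra).
      nra.
    - intros b Hb. destruct (Rlt_or_le b 0) as [Hb0|Hb0].
      + exists 0. split; [exists 0; split; [lra|]|]. unfold flow. field. lra. lra.
      + set (k := (b / V + K) / 2).
        assert (b / V < K) by (apply Rlt_div_l; lra). assert (0 <= b / V) by (apply Rcomplements.Rdiv_le_0_compat; lra).
        exists (k * V). split.
        * exists k. split; [unfold k; lra|]. unfold flow, greenshields. field. unfold k; repeat split; lra.
        * assert (Hbv : b / V * V = b) by (field; lra).
          assert (k * V = (b / V * V + K * V) / 2) by (unfold k; field; lra). nra. }
  assert (E2 : cfl_bound_ae (greenshields V K) K = Finite (V * K)).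
  { unfold cfl_bound_ae. apply lub_eq.
    - intros x [k [d [Hk [Hd ->]]]].
      assert (Hb : Rabs d <= V / K).
      { apply (deriv_bound _ _ _ _ _ Hd). intros e del He Hdel.
        destruct (near_pt K k del HK Hk Hdel) as [y [Hy [Hyk Hyd]]].
        exists y. split; [auto|]. split; [auto|]. split; [auto|].
        unfold greenshields. replace ((V * (1 - y / K) - V * (1 - k / K)) / (y - k)) with (- (V / K)) by (field; lra).
        rewrite Rabs_Ropp, Rabs_right. lra. apply Rle_ge, Rlt_le, Rdiv_lt_0_compat; lra. }
      rewrite abs_dk2. 
      assert (k^2 <= K^2) by (apply pow_incr; lra).
      assert (0 <= Rabs d) by apply Rabs_pos.
      apply Rle_trans with (V / K * K ^ 2). apply Rmult_le_compat; auto. apply pow2_ge_0.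
      right. field. lra.
    - intros b Hb. exists (V * K). split; [|lra]. exists K, (- (V / K)). split; [lra|]. split.
      + unfold deriv_within. rewrite lim_def. intros e He. exists 1. split; [lra|].
        intros y [[Hy Hyk] _]. unfold greenshields.
        replace ((V * (1 - y / K) - V * (1 - K / K)) / (y - K) - - (V / K)) with 0 by (field; lra).
        rewrite Rabs_R0; lra.
      + rewrite abs_dk2, Rabs_Ropp, Rabs_right. field. lra. apply Rle_ge, Rlt_le, Rdiv_lt_0_compat; lra. }
  rewrite E1, E2. simpl. split; split; intro; lra.
Qed.

Lemma tri_pos V W K y : 0 < y -> triangular V W K y = Rmin V (W * (K / y - 1)).
Proof. intro H. unfold triangular. destruct (Rle_dec y 0); [lra|auto]. Qed.

Lemma tri_0 V W K : triangular V W K 0 = V.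
Proof. unfold triangular. destruct (Rle_dec 0 0); [auto|lra]. Qed.

Lemma rmin_lip V a b : Rabs (Rmin V a - Rmin V b) <= Rabs (a - b).
Proof.
  unfold Rmin. destruct (Rle_dec V a), (Rle_dec V b);
  unfold Rabs; repeat destruct Rcase_abs; lra.
Qed.

Lemma part3 : forall K V W : R, 0 < K -> 0 < V -> 0 < W ->
     forall dt dN : R, 0 < dt -> 0 < dN ->
       (Rbar_le (cf_bound (triangular V W K) K) (Finite (dN / dt)) <-> dN / dt >= W * K) /\
       (Rbar_le (cfl_bound_ae (triangular V W K) K) (Finite (dN / dt)) <-> dN / dt >= W * K).
Proof.
  intros K V W HK HV HW dt dN Hdt HdN.
  set (kc := W * K / (V + W)).
  assert (Hkc0 : 0 < kc) by (unfold kc; apply Rdiv_lt_0_compat; nra).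
  assert (HkcK : kc < K).
  { unfold kc. apply Rlt_div_l; nra. }
  assert (Hkc_eq : kc * (V + W) = W * K) by (unfold kc; field; lra).
  assert (Hbelow : forall y, kc <= y -> 0 < y -> W * (K / y - 1) <= V).
  { intros y Hy Hy0. replace (W * (K / y - 1)) with ((W * K - W * y) / y) by (field; lra).
    apply Rle_div_l; lra || nra. }
  assert (E1 : cf_bound (triangular V W K) K = Finite (W * K)).
  { unfold cf_bound. apply lub_eq.
    - intros x [k [Hk ->]]. unfold flow.
      replace (k * triangular V W K k / (1 - k / K)) with (K * (k * triangular V W K k) / (K - k)) by (field; lra).
      apply Rle_div_l; [lra|].
      destruct (Req_dec k 0) as [->|Hk0].
      + rewrite Rmult_0_l, Rmult_0_r. nra.
      + rewrite tri_pos by lra. assert (H := Rmin_r V (W * (K / k - 1))).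
        assert (k * Rmin V (W * (K / k - 1)) <= k * (W * (K / k - 1))) by (apply Rmult_le_compat_l; lra).
        replace (k * (W * (K / k - 1))) with (W * (K - k)) in H0 by (field; lra).
        nra.
    - intros b Hb. exists (W * K). split; [|lra]. exists kc. split; [lra|].
      unfold flow. rewrite tri_pos by lra.
      replace (W * (K / kc - 1)) with V by (unfold kc; field; lra).
      rewrite Rmin_left by lra. unfold kc. field. repeat split; lra. }
  assert (E2 : cfl_bound_ae (triangular V W K) K = Finite (W * K)).
  { unfold cfl_bound_ae. apply lub_eq.
    - intros x [k [d [Hk [Hd ->]]]]. rewrite abs_dk2.
      destruct (Req_dec k 0) as [->|Hk0].
      { simpl. rewrite Rmult_0_l, Rmult_0_r. nra. }
      assert (Hkp : 0 < k) by lra.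
      set (P := W * K). assert (HP : 0 < P) by (unfold P; nra).
      assert (Hk2 : 0 < k^2) by (apply pow_lt; lra).
      assert (Hb : Rabs d <= P / k^2).
      { apply (deriv_bound _ _ _ _ _ Hd). intros e del He Hdel.
        assert (Hk3 : 0 < k^3) by (apply pow_lt; lra).
        set (u := e * k^3 / (2 * P)). assert (Hu : 0 < u) by (unfold u; apply Rdiv_lt_0_compat; nra).
        set (t := Rmin (del/2) (Rmin (k/2) u)).
        assert (T1 := Rmin_l (del/2) (Rmin (k/2) u)). assert (T2 := Rmin_r (del/2) (Rmin (k/2) u)).
        assert (T3 := Rmin_l (k/2) u). assert (T4 := Rmin_r (k/2) u). fold t in T1, T2.
        assert (Ht : 0 < t) by (unfold t; apply Rmin_glb_lt; [lra|apply Rmin_glb_lt; lra]).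
        assert (HPt : P * t <= e * k^3 / 2).
        { assert (P * t <= P * u) by (apply Rmult_le_compat_l; lra).
          replace (P * u) with (e * k^3 / 2) in H by (unfold u; field; lra). lra. }
        set (y := k - t). assert (Hy0 : k / 2 <= y) by (unfold y; lra).
        exists y. split; [unfold Icc0, y; lra|]. split; [unfold y; lra|]. split.
        { unfold y. replace (k - t - k) with (- t) by ring. rewrite Rabs_Ropp, Rabs_right; lra. }
        rewrite !tri_pos by lra.
        set (A := Rmin V (W * (K / y - 1)) - Rmin V (W * (K / k - 1))).
        assert (HA : Rabs A <= P * t / (y * k)).
        { unfold A. eapply Rle_trans; [apply rmin_lip|].
          replace (W * (K / y - 1) - W * (K / k - 1)) with (P * t / (y * k)) by (unfold P, y; field; lra).
          rewrite Rabs_right; [lra|]. apply Rle_ge, Rlt_le, Rdiv_lt_0_compat; nra. }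
        assert (HB : P / (y * k) <= P / k^2 + e).
        { assert (P / (y * k) - P / k^2 = P * t / (y * k^2)) by (unfold y; field; lra).
          assert (P * t / (y * k^2) <= e); [|lra].
          apply Rle_div_l; [nra|]. assert (e * (k/2) * k^2 <= e * y * k^2).
          { apply Rmult_le_compat_r; [lra|]. apply Rmult_le_compat_l; lra. }
          replace (e * k^3 / 2) with (e * (k/2) * k^2) in HPt by (simpl; field). nra. }
        replace (A / (y - k)) with (A * / (y - k)) by reflexivity.
        rewrite Rabs_mult, Rabs_inv. replace (y - k) with (- t) by (unfold y; ring).
        rewrite Rabs_Ropp, (Rabs_right t) by lra.
        apply Rle_div_l; [lra|]. replace (P * t / (y * k)) with (P / (y * k) * t) in HA by (field; lra).
        nra. }
      assert (Rabs d * k^2 <= P / k^2 * k^2) by (apply Rmult_le_compat_r; lra).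
      replace (P / k^2 * k^2) with P in H by (field; nra). lra.
    - intros b Hb. exists (W * K). split; [|lra]. exists K, (- (W / K)). split; [lra|]. split.
      + unfold deriv_within. rewrite lim_def. intros e He.
        assert (HK2 : 0 < K^2) by (apply pow_lt; lra). set (u := e * K^2 / (2 * W)). assert (Hu : 0 < u) by (unfold u; apply Rdiv_lt_0_compat; nra).
        set (alp := Rmin (K - kc) (Rmin (K/2) u)).
        assert (T1 := Rmin_l (K - kc) (Rmin (K/2) u)). assert (T2 := Rmin_r (K - kc) (Rmin (K/2) u)).
        assert (T3 := Rmin_l (K/2) u). assert (T4 := Rmin_r (K/2) u). fold alp in T1, T2.
        exists alp. split; [unfold alp; apply Rmin_glb_lt; [lra|apply Rmin_glb_lt; lra]|].
        intros y [[Hy Hyk] Hya]. unfold Icc0 in Hy.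
        rewrite Rabs_left1 in Hya by lra.
        assert (Hy0 : 0 < y) by lra.
        rewrite !tri_pos by lra. rewrite (Rmin_right V (W * (K / y - 1))) by (apply Hbelow; lra).
        replace (W * (K / K - 1)) with 0 by (field; lra). rewrite (Rmin_right V 0) by lra.
        replace ((W * (K / y - 1) - 0) / (y - K) - - (W / K)) with (- (W * (K - y) / (y * K))) by (field; lra).
        rewrite Rabs_Ropp, Rabs_right by (apply Rle_ge, Rlt_le, Rdiv_lt_0_compat; nra).
        apply Rlt_div_l; [nra|].
        assert (W * (K - y) < W * u) by (apply Rmult_lt_compat_l; lra).
        replace (W * u) with (e * K^2 / 2) in H by (unfold u; field; lra).
        assert (e * (K/2) * K <= e * y * K) by (apply Rmult_le_compat_r; [lra|]; apply Rmult_le_compat_l; lra).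
        replace (e * K^2 / 2) with (e * (K/2) * K) in H by (simpl; field). nra.
      + rewrite abs_dk2, Rabs_Ropp, Rabs_right. field. lra. apply Rle_ge, Rlt_le, Rdiv_lt_0_compat; lra. }
  rewrite E1, E2. simpl. split; split; intro; lra.
Qed.

Theorem theorem4p3 :
  (* main statement *)
  (forall (K : R) (eta eta1 eta2 : R -> R),
     0 < K ->
     (forall k, 0 <= k <= K -> 0 <= eta k) ->
     (forall k, 0 <= k <= K -> deriv_within (Icc0 K) eta k (eta1 k)) ->
     (forall k, 0 <= k <= K -> deriv_within (Icc0 K) eta1 k (eta2 k)) ->
     eta K = 0 ->
     (forall k, 0 <= k <= K -> eta1 k <= 0) ->
     (forall k, 0 <= k < K -> k * eta2 k + 2 * eta1 k <= 0) ->
     forall dt dN : R, 0 < dt -> 0 < dN ->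
       (Rbar_le (cf_bound eta K) (Finite (dN / dt)) <->
        Rbar_le (cfl_bound eta1 K) (Finite (dN / dt))))
  /\
  (* Greenshields *)
  (forall K V : R, 0 < K -> 0 < V ->
     forall dt dN : R, 0 < dt -> 0 < dN ->
       (Rbar_le (cf_bound (greenshields V K) K) (Finite (dN / dt)) <-> dN / dt >= V * K) /\
       (Rbar_le (cfl_bound_ae (greenshields V K) K) (Finite (dN / dt)) <-> dN / dt >= V * K))
  /\
  (* triangular *)
  (forall K V W : R, 0 < K -> 0 < V -> 0 < W ->
     forall dt dN : R, 0 < dt -> 0 < dN ->
       (Rbar_le (cf_bound (triangular V W K) K) (Finite (dN / dt)) <-> dN / dt >= W * K) /\
       (Rbar_le (cfl_bound_ae (triangular V W K) K) (Finite (dN / dt)) <-> dN / dt >= W * K)).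
Proof.
  split; [|split].
  - intros K eta eta1 eta2 HK Hpos Hd1 Hd2 HK0 Hneg Hconc dt dN Hdt HdN.
    destruct (part1 K eta eta1 eta2 HK Hpos Hd1 Hd2 HK0 Hneg Hconc) as [-> ->]. tauto.
  - exact part2.
  - exact part3.
Qed.
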